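(* If the MDE $\check{\Sigma}$ of $\Sigma$ under ${\rm M}_+(G)$ exists, it is the unique positive definite solution to the following system, where $\check K=\check{\Sigma}^{-1}$ and $\widehat{K}=\widehat{\Sigma}^{-1}$: (i) $\check{\Sigma}_{ij} \geq 0$ for $ij\in E(G)$; (ii) $\widehat{\Sigma}_{ij}=S_{ij}$ for $ij\in E(G)$; (iii) $\widehat{\Sigma}_{ii}=S_{ii}$ for $i\in V(G)$; (iv) $\check K_{ij} = \widehat{K}_{ij}=0$ for $ij\notin E(G)$; (v) $\check K_{ij} \leq \widehat{K}_{ij}$ for $ij\in E(G)$; (vi) $\check K_{ii} =\widehat{K}_{ii}$ for $i\in V(G)$; (vii) $\check{\Sigma}_{ij}(\widehat{K}_{ij}- \check K_{ij})=0$ for $ij\in E(G)$.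
   Context: Let $G=(V,E)$ be an undirected graph on $V=\{1,\ldots,d\}$, and let $S$ be the sample covariance matrix of $n$ i.i.d. observations from $N(0,\Sigma^* )$. $M(G)$ is the Gaussian graphical model ($(\Sigma^{-1})_{ij}=0$ for $ij\notin E$), $A(G)$ the set of positive definite $\Sigma$ with $\Sigma_{ij}\geq 0$ for all $ij\in E$ (locally associated Gaussian distributions), and ${\rm M}_+(G)=A(G)\cap M(G)$. $\widehat K$ is the maximum likelihood estimate of $K=\Sigma^{-1}$ in $M(G)$. The mixed dual estimate (MDE) $\check\Sigma$ is the solution of minimizing $-\log\det\Sigma+\operatorname{tr}(\Sigma\widehat K)$ over positive definite $\Sigma$ subject to $\Sigma_{ij}\geq 0$ for all $ij\in E(G)$. *)

(* Defs.v *)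
From HB Require Import structures.
From mathcomp Require Import all_boot all_order all_algebra.
From mathcomp Require Import reals exp.
Set Implicit Arguments. Unset Strict Implicit. Unset Printing Implicit Defensive.
Import Order.TTheory GRing.Theory Num.Theory.
Local Open Scope ring_scope.

Definition simple_graph (d : nat) (E : rel 'I_d) : Prop :=
  (forall i j, E i j = E j i) /\ (forall i, ~~ E i i).

Definition posdef (R : realType) (d : nat) (A : 'M[R]_d) : Prop :=
  A^T = A /\ forall v : 'cV[R]_d, v != 0 -> 0 < (v^T *m A *m v) 0 0.

(* Sample covariance of n observations (rows of X), mean known to be zero:
   S = (1/n) sum_k x_k x_k^T = (1/n) X^T X. *)
Definition sample_cov (R : realType) (n d : nat) (X : 'M[R]_(n, d)) : 'M[R]_d :=
  n%:R^-1 *: (X^T *m X).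

Definition in_model (R : realType) (d : nat) (E : rel 'I_d) (K : 'M[R]_d) : Prop :=
  forall i j, i != j -> ~~ E i j -> K i j = 0.

Definition is_MLE (R : realType) (d : nat) (E : rel 'I_d) (S Khat : 'M[R]_d) : Prop :=
  posdef Khat /\ in_model E Khat /\
  forall K : 'M[R]_d, posdef K -> in_model E K ->
    ln (\det K) - \tr (K *m S) <= ln (\det Khat) - \tr (Khat *m S).

Definition loc_assoc (R : realType) (d : nat) (E : rel 'I_d) (Sig : 'M[R]_d) : Prop :=
  forall i j, E i j -> 0 <= Sig i j.

Definition mde_obj (R : realType) (d : nat) (Khat Sig : 'M[R]_d) : R :=
  - ln (\det Sig) + \tr (Sig *m Khat).

Definition is_MDE (R : realType) (d : nat) (E : rel 'I_d) (Khat Sigc : 'M[R]_d) : Prop :=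
  posdef Sigc /\ loc_assoc E Sigc /\
  forall Sig : 'M[R]_d, posdef Sig -> loc_assoc E Sig ->
    mde_obj Khat Sigc <= mde_obj Khat Sig.

Definition mde_system (R : realType) (d : nat) (E : rel 'I_d) (S Khat Sigc : 'M[R]_d)
  : Prop :=
  let Kc := invmx Sigc in
  let Shat := invmx Khat in
  (forall i j, E i j -> 0 <= Sigc i j) /\
      (forall i j, E i j -> Shat i j = S i j) /\
      (forall i, Shat i i = S i i) /\
      (forall i j, i != j -> ~~ E i j -> Kc i j = 0 /\ Khat i j = 0) /\
      (forall i j, E i j -> Kc i j <= Khat i j) /\
      (forall i, Kc i i = Khat i i) /\
      (forall i j, E i j -> Sigc i j * (Khat i j - Kc i j) = 0).

(* Main.v *)
Require Import Defs.
From mathcomp Require Import all_boot all_order all_algebra.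
From mathcomp Require Import reals exp.
From mathcomp Require Import ring lra.
Set Implicit Arguments. Unset Strict Implicit. Unset Printing Implicit Defensive.
Import Order.TTheory GRing.Theory Num.Theory.
Local Open Scope ring_scope.

Lemma posdef_block (R : realType) d (a : R) (b : 'cV[R]_d) (C : 'M[R]_d) :
  posdef (block_mx a%:M b^T b C : 'M_(1+d)) ->
  0 < a /\ posdef (C - a^-1 *: (b *m b^T)).
Proof.
case=> Hs Hq.
move: Hs; rewrite tr_block_mx trmxK => /eq_block_mx [_ _ _ HC].
have ha : 0 < a.
  have := Hq (col_mx 1 0).
  rewrite col_mx_eq0 oner_eq0 /= => /(_ isT).
  rewrite tr_col_mx mul_row_block mul_row_col !trmx0 trmx1 !mul0mx !mul1mx !addr0.
  by rewrite mulmx1 mulmx0 addr0 mxE eqxx mulr1n.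
split=> //; split.
  by rewrite linearB /= linearZ /= trmx_mul trmxK HC.
move=> v v0.
set s := (b^T *m v) 0 0.
have bv : b^T *m v = s%:M by rewrite {1}[b^T *m v]mx11_scalar.
have vb : v^T *m b = s%:M by rewrite -[b in v^T *m b]trmxK -trmx_mul bv tr_scalar_mx.
have := Hq (col_mx (- (a^-1 * s))%:M v).
rewrite col_mx_eq0 (negbTE v0) andbF => /(_ isT).
rewrite tr_col_mx mul_row_block mul_row_col tr_scalar_mx.
rewrite !mulmxDl vb -!scalar_mxM -!mulmxA bv -!scalar_mxM.
rewrite mulmxBl mulmxBr -scalemxAl -scalemxAr -mulmxA bv mul_mx_scalar -scalemxAr vb scale_scalar_mx scale_scalar_mx.
rewrite !mxE !eqxx !mulr1n.
set X := \sum_j _.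
suff -> : - (a^-1 * s) * a * - (a^-1 * s) + s * - (a^-1 * s) + (- (a^-1 * s) * s + X)
   = X - a^-1 * (s * s) by [].
by field; rewrite gt_eqF.
Qed.

Lemma chol (R : realType) d (A : 'M[R]_d) : posdef A ->
  exists L : 'M[R]_d, [/\ L *m L^T = A, is_trig_mx L & forall i, 0 < L i i].
Proof.
elim: d A => [|d IH] A PA.
  exists 0; split; first by rewrite [A]flatmx0 [_ *m _]flatmx0.
    by apply/is_trig_mxP => -[].
  by case.
pose A' : 'M[R]_(1 + d) := A.
have EA : A' = block_mx (ulsubmx A') (ursubmx A') (dlsubmx A') (drsubmx A') by rewrite submxK.
have PA' : posdef A' by [].
move: PA'; rewrite EA; set Aul := ulsubmx A'; set Aur := ursubmx A'; set Adl := dlsubmx A'; set Adr := drsubmx A'.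
move=> PA'.
have Hs := PA'.1; move: Hs; rewrite tr_block_mx => /eq_block_mx [_ _ HAur _].
have HA2 : Aur = Adl^T by rewrite -HAur trmxK.
rewrite HA2 [Aul]mx11_scalar in PA'.
have [ha PS] := posdef_block PA'.
have [L' [EL' TL' DL']] := IH _ PS.
set l := Num.sqrt (Aul 0 0).
have hl : 0 < l by rewrite sqrtr_gt0.
have hl2 : l * l = Aul 0 0 by rewrite -expr2 sqr_sqrtr // ltW.
exists (block_mx l%:M 0 (l^-1 *: Adl) L' : 'M_(1 + d)); split.
- change (block_mx l%:M 0 (l^-1 *: Adl) L' *m (block_mx l%:M 0 (l^-1 *: Adl) L')^T = A').
  rewrite EA tr_block_mx mulmx_block -/Aul -/Aur -/Adl -/Adr HA2 [Aul]mx11_scalar.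
  congr (block_mx _ _ _ _).
  + by rewrite tr_scalar_mx -scalar_mxM mul0mx addr0 hl2.
  + by rewrite mul0mx addr0 mul_scalar_mx linearZ /= scalerA mulfV ?gt_eqF // scale1r.
  + by rewrite trmx0 mulmx0 addr0 tr_scalar_mx mul_mx_scalar scalerA mulfV ?gt_eqF // scale1r.
  + rewrite EL' linearZ /= -scalemxAl -scalemxAr scalerA -invfM hl2.
    by rewrite addrC subrK.
- apply/is_trig_mxP => i j.
  case: (@split_ordP 1 d i) => i' ->; case: (@split_ordP 1 d j) => j' -> /=.
  + by rewrite !ord1.
  + by rewrite (@block_mxEur _ 1 d 1 d) mxE.
  + by rewrite ord1.
  + rewrite (@block_mxEdr _ 1 d 1 d) ltn_add2l => ij.
    by move/is_trig_mxP: TL'; apply.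
- move=> i; case: (@split_ordP 1 d i) => i' ->.
  + by rewrite (@block_mxEul _ 1 d 1 d) mxE eqxx mulr1n.
  + by rewrite (@block_mxEdr _ 1 d 1 d).
Qed.

Lemma trig_det_gt0 (R : realType) d (L : 'M[R]_d) :
  is_trig_mx L -> (forall i, 0 < L i i) -> 0 < \det L.
Proof. by move=> T D; rewrite det_trig //; apply: prodr_gt0 => i _. Qed.

Lemma posdef_det (R : realType) d (A : 'M[R]_d) : posdef A -> 0 < \det A.
Proof.
move=> /chol [L [<- T D]].
by rewrite det_mulmx det_tr mulr_gt0 // trig_det_gt0.
Qed.

Lemma posdef_unit (R : realType) d (A : 'M[R]_d) : posdef A -> A \in unitmx.
Proof. by move=> /posdef_det h; rewrite unitmxE unitfE gt_eqF. Qed.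

Lemma inv_eq (R : realType) d (A X : 'M[R]_d) : A \in unitmx -> A *m X = 1%:M -> invmx A = X.
Proof. by move=> uA h; rewrite -[X](mulKmx uA) h mulmx1. Qed.

Lemma posdef_congr (R : realType) d (B P : 'M[R]_d) : posdef B -> P \in unitmx ->
  posdef (P^T *m B *m P).
Proof.
move=> [sB qB] uP; split.
  by rewrite !trmx_mul trmxK sB mulmxA.
move=> v v0; have Pv0 : P *m v != 0.
  apply: contra v0 => /eqP h; by rewrite -[v](mulKmx uP) h mulmx0.
have := qB _ Pv0; by rewrite trmx_mul !mulmxA.
Qed.

Lemma posdef_inv (R : realType) d (A : 'M[R]_d) : posdef A -> posdef (invmx A).
Proof.
move=> PA; have uA := posdef_unit PA.
have -> : invmx A = (invmx A)^T *m A *m invmx A.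
  by rewrite trmx_inv PA.1 mulVmx // mul1mx.
by apply: posdef_congr => //; rewrite unitmx_inv.
Qed.

Lemma sym_inv (R : realType) d (A : 'M[R]_d) : A^T = A -> (invmx A)^T = invmx A.
Proof. by move=> h; rewrite trmx_inv h. Qed.

Lemma ln_prod_le (R : realType) d (x : 'I_d -> R) : (forall i, 0 < x i) ->
  0 < \prod_i x i /\ ln (\prod_i x i) <= \sum_i (x i - 1).
Proof.
move=> hx; apply: (big_rec2 (fun p s => 0 < p /\ ln p <= s)).
  by rewrite ln1.
move=> i p s _ [hp hs]; split; first by rewrite mulr_gt0.
rewrite lnM ?posrE //; apply: lerD => //.
have := @le_ln1Dx R (x i - 1); rewrite addrCA subrr addr0; apply.
by rewrite ltrBrDl subrr.
Qed.

Lemma tangent (R : realType) d (A B : 'M[R]_d) : posdef A -> posdef B ->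
  ln (\det B) - ln (\det A) <= \tr (invmx A *m (B - A)).
Proof.
move=> PA PB.
have [L [EL TL DL]] := chol PA.
have uL : L \in unitmx by rewrite unitmxE unitfE gt_eqF // trig_det_gt0.
have uLT : L^T \in unitmx by rewrite unitmx_tr.
set P := invmx L^T.
have uP : P \in unitmx by rewrite unitmx_inv.
have PT : P^T = invmx L by rewrite trmx_inv trmxK.
set M := P^T *m B *m P.
have PM : posdef M by apply: posdef_congr.
have [N [EN TN DN]] := chol PM.
have EB : B = L *m M *m L^T.
  by rewrite /M PT !mulmxA (mulmxV uL) mul1mx -mulmxA (mulVmx uLT) mulmx1.
have dA := posdef_det PA; have dM := posdef_det PM.
have dB : \det B = \det A * \det M by rewrite EB -EL !det_mulmx !det_tr; ring.
have iA : invmx A = P *m P^T.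
  by apply: inv_eq; [exact: posdef_unit | rewrite -EL PT !mulmxA -(mulmxA L) (mulmxV uLT) mulmx1 (mulmxV uL)].
rewrite dB lnM ?posrE // addrC addKr mulmxBr linearB /= mulVmx ?posdef_unit // mxtrace1.
rewrite iA -mulmxA mxtrace_mulC -/M.
have -> : \det M = \prod_i (N i i * N i i).
  by rewrite -EN det_mulmx det_tr det_trig // -big_split.
have [_ h] := ln_prod_le (fun i => mulr_gt0 (DN i) (DN i)).
apply: (le_trans h).
rewrite /mxtrace sumrB sumr_const card_ord lerD2r.
apply: ler_sum => i _; rewrite -EN mxE (bigD1 i) //= mxE lerDl.
by apply: sumr_ge0 => j _; rewrite mxE -expr2 sqr_ge0.
Qed.

Lemma sq_le_sum (R : realType) d (w : 'cV[R]_d) i :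
  w i 0 * w i 0 <= (w^T *m w) 0 0.
Proof.
rewrite mxE (bigD1 i) //= mxE lerDl.
by apply: sumr_ge0 => j _; rewrite mxE -expr2 sqr_ge0.
Qed.

Lemma prod_le_sum (R : realType) d (w : 'cV[R]_d) i j :
  `|w i 0| * `|w j 0| <= (w^T *m w) 0 0.
Proof.
have sq k : `|w k 0| * `|w k 0| = w k 0 * w k 0.
  by rewrite -!expr2 real_normK ?num_real.
have [h|h] := leP `|w i 0| `|w j 0|.
  apply: le_trans (sq_le_sum w j); rewrite -sq.
  by apply: ler_wpM2r.
apply: le_trans (sq_le_sum w i); rewrite -sq.
by apply: ler_wpM2l => //; apply: ltW.
Qed.

Lemma quad_bound (R : realType) d (G : 'M[R]_d) (w : 'cV[R]_d) :
  `|(w^T *m G *m w) 0 0| <= (\sum_j \sum_i `|G i j|) * (w^T *m w) 0 0.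
Proof.
set q := (w^T *m w) 0 0.
rewrite mxE mulr_suml; apply: (le_trans (ler_norm_sum _ _ _)).
apply: ler_sum => j _; rewrite mxE normrM mulr_suml.
apply: (le_trans (ler_wpM2r (normr_ge0 _) (ler_norm_sum _ _ _))).
rewrite mulr_suml; apply: ler_sum => i _.
rewrite normrM mxE [`|w i 0| * _]mulrC -mulrA.
by apply: ler_wpM2l => //; apply: prod_le_sum.
Qed.

Lemma entry_DZ (R : realType) d (X Y : 'M[R]_d) (t : R) i j :
  (X + t *: Y) i j = X i j + t * Y i j.
Proof. by rewrite !mxE. Qed.

Lemma pert (R : realType) d (A H : 'M[R]_d) : posdef A -> H^T = H ->
  exists2 eta : R, 0 < eta & forall t, `|t| < eta -> posdef (A + t *: H).
Proof.
move=> PA sH.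
have [L [EL TL DL]] := chol PA.
have uL : L \in unitmx by rewrite unitmxE unitfE gt_eqF // trig_det_gt0.
have uLT : L^T \in unitmx by rewrite unitmx_tr.
set G := invmx L *m H *m invmx L^T.
set c := \sum_j \sum_i `|G i j|.
have c0 : 0 <= c by apply: sumr_ge0 => j _; apply: sumr_ge0 => i _.
have c1 : 0 < c + 1 by apply: ltr_wpDl.
exists (c + 1)^-1; first by rewrite invr_gt0.
move=> t ht; split.
  by rewrite linearD /= linearZ /= PA.1 sH.
move=> v v0; set w := L^T *m v.
have Eq : (v^T *m A *m v) 0 0 = (w^T *m w) 0 0.
  by rewrite -EL /w trmx_mul trmxK !mulmxA.
have hq : 0 < (w^T *m w) 0 0 by rewrite -Eq; apply: PA.2.
have EH : H = L *m G *m L^T.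
  by rewrite /G !mulmxA (mulmxV uL) mul1mx -mulmxA (mulVmx uLT) mulmx1.
have vH : (v^T *m H *m v) 0 0 = (w^T *m G *m w) 0 0.
  by rewrite EH /w trmx_mul trmxK !mulmxA.
rewrite mulmxDr mulmxDl -scalemxAr -scalemxAl entry_DZ Eq vH.
set q := (w^T *m w) 0 0; set x := (w^T *m G *m w) 0 0.
have h1 : `|x| <= c * q by apply: quad_bound.
have h2 : `|t| * c < 1.
  have := ht; rewrite -(ltr_pM2r c1) mulVf ?gt_eqF // => h.
  apply: le_lt_trans h; apply: ler_wpM2l => //; lra.
have h3 : `|t| * `|x| <= `|t| * (c * q) by apply: ler_wpM2l.
have h4 : `|t| * (c * q) < q.
  by rewrite mulrA -[X in _ < X]mul1r ltr_pM2r.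
have h5 : - (t * x) <= `|t| * `|x| by rewrite -normrM -normrN ler_norm.
lra.
Qed.

Lemma horner_bound (R : realType) (q : {poly R}) (t : R) : `|t| <= 1 ->
  `|q.[t]| <= \sum_(i < size q) `|q`_i|.
Proof.
move=> ht; rewrite horner_coef; apply: (le_trans (ler_norm_sum _ _ _)).
apply: ler_sum => i _; rewrite normrM normrX.
by apply: ler_piMr => //; apply: exprn_ile1.
Qed.

Lemma poly_lim (R : realType) (r : {poly R}) (del : R) : 0 < del ->
  (forall t, 0 < t -> t < del -> r.[t] <= 0) -> r.[0] <= 0.
Proof.
move=> hdel hr; rewrite leNgt; apply/negP => r0.
have : root (r - r.[0]%:P) 0 by rewrite /root hornerD hornerN hornerC subrr.
move=> /factor_theorem [q Eq].
have Er t : r.[t] = r.[0] + q.[t] * t.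
  have := congr1 (fun p => p.[t]) Eq; rewrite /= hornerD hornerN hornerC hornerM.
  by rewrite hornerD hornerN hornerX hornerC subr0 => <-; rewrite addrC subrK.
set B := \sum_(i < size q) `|q`_i|.
have B0 : 0 <= B by apply: sumr_ge0.
have B1 : 0 < B + 1 by apply: ltr_wpDl.
set m := Num.min del (Num.min 1 (r.[0] / (B + 1))).
have m0 : 0 < m by rewrite !lt_min hdel ltr01 divr_gt0.
have mdel : m <= del by rewrite ge_min lexx.
have m1 : m <= 1 by rewrite ge_min ge_min lexx orbT.
have mr : m <= r.[0] / (B + 1) by rewrite ge_min ge_min lexx !orbT.
set t := m / 2.
have t0 : 0 < t by rewrite divr_gt0.
have tm : t < m by rewrite ltr_pdivrMr // ltr_pMr // ltr1n.
have := hr t t0 (lt_le_trans tm mdel).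
rewrite Er.
have hB : `|q.[t]| <= B by apply: horner_bound; rewrite ger0_norm ?(ltW t0) //; exact: le_trans (ltW tm) m1.
have h1 : - (q.[t] * t) <= B * t.
  apply: (le_trans (ler_norm _)); rewrite normrN normrM (ger0_norm (ltW t0)).
  by apply: ler_wpM2r => //; apply: ltW.
have h2 : (B + 1) * t <= r.[0].
  rewrite mulrC -ler_pdivlMr //; apply: le_trans mr; exact: ltW.
rewrite mulrDl mul1r in h2.
lra.
Qed.

Lemma tr_inv_poly (R : realType) d (A H : 'M[R]_d) : exists p q : {poly R},
  forall t, p.[t] = \det (A + t *: H) /\
    (A + t *: H \in unitmx -> \tr (invmx (A + t *: H) *m H) = q.[t] / p.[t]).
Proof.
pose MP : 'M[{poly R}]_d := map_mx polyC A + 'X *: map_mx polyC H.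
exists (\det MP), (\tr (\adj MP *m map_mx polyC H)) => t.
have ev : map_mx (horner_eval t) MP = A + t *: H.
  apply/matrixP => i j; rewrite !mxE /= horner_evalE.
  by rewrite hornerD hornerM hornerX !hornerC.
have evH : map_mx (horner_eval t) (map_mx polyC H) = H.
  by apply/matrixP => i j; rewrite !mxE /= horner_evalE hornerC.
have Ep : (\det MP).[t] = \det (A + t *: H).
  by rewrite -horner_evalE -det_map_mx ev.
have Eq : (\tr (\adj MP *m map_mx polyC H)).[t] = \tr (\adj (A + t *: H) *m H).
  by rewrite -horner_evalE -trace_map_mx map_mxM map_mx_adj ev evH.
split=> // u.
by rewrite Ep Eq /invmx u -scalemxAl mxtraceZ mulrC.
Qed.

Lemma deriv_le (R : realType) d (A H : 'M[R]_d) (c del : R) :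
  posdef A -> H^T = H -> 0 < del ->
  (forall t, 0 < t -> t < del -> posdef (A + t *: H) ->
     ln (\det (A + t *: H)) - ln (\det A) <= t * c) ->
  \tr (invmx A *m H) <= c.
Proof.
move=> PA sH hdel hyp.
have [eta heta Heta] := pert PA sH.
have [p [q Epq]] := tr_inv_poly A H.
have key t : posdef (A + t *: H) ->
    (\tr (invmx (A + t *: H) *m H) <= c) = ((q - c *: p).[t] <= 0).
  move=> Pt; have [Ep Eq] := Epq t.
  rewrite (Eq (posdef_unit Pt)) hornerD hornerN hornerZ Ep subr_le0.
  by rewrite ler_pdivrMr ?posdef_det // mulrC.
have A0 : A + 0 *: H = A by rewrite scale0r addr0.
have P0 : posdef (A + 0 *: H) by rewrite A0.
have := key 0 P0; rewrite A0 => ->.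
apply: (@poly_lim _ _ (Num.min del eta)); first by rewrite lt_min hdel heta.
move=> t t0; rewrite lt_min => /andP [tdel teta].
have Pt : posdef (A + t *: H) by apply: Heta; rewrite ger0_norm ?ltW.
rewrite -(key t Pt).
have T := tangent Pt PA.
have h := hyp t t0 tdel Pt.
have E : A - (A + t *: H) = - (t *: H) by rewrite opprD addrA subrr add0r.
rewrite E mulmxN -scalemxAr linearN /= mxtraceZ in T.
rewrite -(ler_pM2l t0); lra.
Qed.

Lemma trace_pos (R : realType) d (D P Q : 'M[R]_d) : D^T = D -> posdef P -> posdef Q ->
  \tr (D *m P *m D *m Q) <= 0 -> D = 0.
Proof.
move=> sD PP PQ.
have [L [EL TL DL]] := chol PQ.
have uL : L \in unitmx by rewrite unitmxE unitfE gt_eqF // trig_det_gt0.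
set N := D *m L.
have ET : \tr (D *m P *m D *m Q) = \sum_k (N^T *m P *m N) k k.
  by rewrite -EL mulmxA mxtrace_mulC /N trmx_mul sD !mulmxA.
pose e k : 'cV[R]_d := delta_mx k 0.
have ek (M : 'M[R]_d) k : M k k = ((e k)^T *m M *m e k) 0 0.
  by rewrite /e trmx_delta -rowE -colE !mxE.
have f0 k : 0 <= (N^T *m P *m N) k k.
  rewrite ek; set u := N *m e k.
  have -> : (e k)^T *m (N^T *m P *m N) *m e k = u^T *m P *m u.
    by rewrite /u [(N *m _)^T]trmx_mul !mulmxA.
  have [u0|u0] := eqVneq u 0; first by rewrite u0 mulmx0 mxE.
  exact: ltW (PP.2 u u0).
rewrite ET => hs.
have hs0 : \sum_k (N^T *m P *m N) k k = 0 by apply/le_anti; rewrite hs sumr_ge0.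
have Z := psumr_eq0P (fun k _ => f0 k) hs0.
have N0 : N = 0.
  apply/matrixP => i k; rewrite mxE.
  have := Z k isT; rewrite ek; set u := N *m e k.
  have -> : (e k)^T *m (N^T *m P *m N) *m e k = u^T *m P *m u.
    by rewrite /u [(N *m _)^T]trmx_mul !mulmxA.
  have [u0|u0] := eqVneq u 0.
    move=> _; have := congr1 (fun M : 'cV[R]_d => M i 0) u0; rewrite /u /e -colE !mxE => ->.
    done.
  by move=> h; have := PP.2 u u0; rewrite h ltxx.
by rewrite -[D]mulmx1 -(mulmxV uL) mulmxA -/N N0 mul0mx.
Qed.

Lemma tr_delta (R : realType) d (A : 'M[R]_d) i j : \tr (A *m delta_mx i j) = A j i.
Proof.
rewrite -(@mul_delta_mx R d 1 d 0 i j) mulmxA mxtrace_mulC mulmxA trace_mx11.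
by rewrite -rowE -colE !mxE.
Qed.

Definition Hd (R : realType) d (i j : 'I_d) : 'M[R]_d := delta_mx i j + delta_mx j i.

Lemma Hd_sym (R : realType) d (i j : 'I_d) : (Hd R i j)^T = Hd R i j.
Proof. by rewrite /Hd linearD /= !trmx_delta addrC. Qed.

Lemma tr_Hd (R : realType) d (A : 'M[R]_d) i j : \tr (A *m Hd R i j) = A j i + A i j.
Proof. by rewrite /Hd mulmxDr mxtraceD !tr_delta. Qed.

Lemma tr_Hd' (R : realType) d (A : 'M[R]_d) i j : \tr (Hd R i j *m A) = A j i + A i j.
Proof. by rewrite mxtrace_mulC tr_Hd. Qed.

Lemma Hd_entry (R : realType) d (i j a b : 'I_d) :
  Hd R i j a b = ((a == i) && (b == j))%:R + ((a == j) && (b == i))%:R.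
Proof. by rewrite /Hd !mxE. Qed.

Lemma Hd_ge0 (R : realType) d (i j a b : 'I_d) : 0 <= Hd R i j a b.
Proof. by rewrite Hd_entry addr_ge0. Qed.

Lemma Hd_nonedge (R : realType) d (E : rel 'I_d) (i j : 'I_d) :
  simple_graph E -> (i == j) || E i j ->
  forall a b, a != b -> ~~ E a b -> Hd R i j a b = 0.
Proof.
move=> [Es _] hij a b ab nE; rewrite Hd_entry.
have h1 : ((a == i) && (b == j)) = false.
  apply/negP => /andP [/eqP ai /eqP bj]; subst a b.
  by move: hij; rewrite (negbTE ab) (negbTE nE).
have h2 : ((a == j) && (b == i)) = false.
  apply/negP => /andP [/eqP aj /eqP bi]; subst a b.
  by move: hij; rewrite eq_sym (negbTE ab) Es (negbTE nE).
by rewrite h1 h2 addr0.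
Qed.

Lemma Hd_edge (R : realType) d (E : rel 'I_d) (i j : 'I_d) :
  simple_graph E -> ~~ E i j -> forall a b, E a b -> Hd R i j a b = 0.
Proof.
move=> [Es _] nij a b eab; rewrite Hd_entry.
have h1 : ((a == i) && (b == j)) = false.
  apply/negP => /andP [/eqP ai /eqP bj]; subst a b.
  by rewrite eab in nij.
have h2 : ((a == j) && (b == i)) = false.
  apply/negP => /andP [/eqP aj /eqP bi]; subst a b.
  by rewrite Es eab in nij.
by rewrite h1 h2 addr0.
Qed.

Lemma mle_dir (R : realType) d (E : rel 'I_d) (S K G : 'M[R]_d) :
  is_MLE E S K -> G^T = G -> (forall a b, a != b -> ~~ E a b -> G a b = 0) ->
  \tr (invmx K *m G) <= \tr (G *m S).
Proof.
move=> [PK [mK opt]] sG G0.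
apply: (@deriv_le _ _ _ _ _ 1) => // t t0 _ Pt.
have mt : in_model E (K + t *: G).
  by move=> a b ab nE; rewrite entry_DZ mK // G0 // mulr0 addr0.
have := opt _ Pt mt.
rewrite mulmxDl mxtraceD -scalemxAl mxtraceZ.
lra.
Qed.

Lemma mde_dir (R : realType) d (E : rel 'I_d) (Kh Sc G : 'M[R]_d) (del : R) :
  is_MDE E Kh Sc -> G^T = G -> 0 < del ->
  (forall t, 0 < t -> t < del -> loc_assoc E (Sc + t *: G)) ->
  \tr (invmx Sc *m G) <= \tr (G *m Kh).
Proof.
move=> [PS [la opt]] sG hdel hla.
apply: (@deriv_le _ _ _ _ _ del) => // t t0 tdel Pt.
have := opt _ Pt (hla t t0 tdel).
rewrite /mde_obj mulmxDl mxtraceD -scalemxAl mxtraceZ.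
lra.
Qed.

Lemma symE (R : realType) d (M : 'M[R]_d) : M^T = M -> forall a b, M b a = M a b.
Proof. by move=> h a b; rewrite -[in LHS]h mxE. Qed.

Lemma negHd_sym (R : realType) d (i j : 'I_d) : (- Hd R i j)^T = - Hd R i j.
Proof. by rewrite linearN /= Hd_sym. Qed.

Lemma tr_negHd (R : realType) d (A : 'M[R]_d) i j :
  \tr (A *m - Hd R i j) = - (A j i + A i j) /\ \tr (- Hd R i j *m A) = - (A j i + A i j).
Proof. by rewrite mulmxN mulNmx !linearN /= tr_Hd tr_Hd'. Qed.

Lemma part1 (R : realType) (d n : nat) (E : rel 'I_d)
  (X : 'M[R]_(n, d)) (Khat Sigc : 'M[R]_d) :
  simple_graph E -> is_MLE E (sample_cov X) Khat -> is_MDE E Khat Sigc ->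
  mde_system E (sample_cov X) Khat Sigc.
Proof.
move=> sg MLE MDE.
have [Es Ei] := sg.
set S := sample_cov X.
have sS : S^T = S by rewrite /S /sample_cov linearZ /= trmx_mul trmxK.
have [PK [mK _]] := MLE; have [PS [la _]] := MDE.
have sK : Khat^T = Khat := PK.1.
have sSh : (invmx Khat)^T = invmx Khat := sym_inv sK.
have sSc : Sigc^T = Sigc := PS.1.
have sKc : (invmx Sigc)^T = invmx Sigc := sym_inv sSc.
have mle_eq i j : (i == j) || E i j -> invmx Khat i j = S i j.
  move=> hij.
  have h1 := mle_dir MLE (Hd_sym R i j) (Hd_nonedge R sg hij).
  have h2 := mle_dir MLE (negHd_sym R i j)
    (fun a b ab nE => ltac:(by rewrite mxE (Hd_nonedge R sg hij) // oppr0)).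
  have [e1 e2] := tr_negHd (invmx Khat) i j; have [e3 e4] := tr_negHd S i j.
  rewrite e1 e4 in h2; rewrite tr_Hd tr_Hd' in h1.
  rewrite (symE sSh) (symE sS) in h1 h2.
  apply/eqP; rewrite eq_le; apply/andP; split; lra.
have mde_eq i j : ~~ E i j -> invmx Sigc i j = Khat i j.
  move=> nij.
  have h1 := mde_dir MDE (Hd_sym R i j) ltr01
    (fun t _ _ a b eab => ltac:(rewrite entry_DZ (Hd_edge R sg nij eab) mulr0 addr0; exact: la eab)).
  have h2 := mde_dir MDE (negHd_sym R i j) ltr01
    (fun t _ _ a b eab => ltac:(rewrite entry_DZ mxE (Hd_edge R sg nij eab) oppr0 mulr0 addr0; exact: la eab)).
  have [e1 e2] := tr_negHd (invmx Sigc) i j; have [e3 e4] := tr_negHd Khat i j.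
  rewrite e1 e4 in h2; rewrite tr_Hd tr_Hd' in h1.
  rewrite (symE sKc) (symE sK) in h1 h2.
  apply/eqP; rewrite eq_le; apply/andP; split; lra.
have mde_le i j : E i j -> invmx Sigc i j <= Khat i j.
  move=> eij.
  have h1 := mde_dir MDE (Hd_sym R i j) ltr01
    (fun t t0 _ a b eab => ltac:(rewrite entry_DZ; apply: addr_ge0;
       [exact: la eab | apply: mulr_ge0; [exact: ltW | exact: Hd_ge0]])).
  rewrite tr_Hd tr_Hd' (symE sKc) (symE sK) in h1.
  lra.
have mde_comp i j : E i j -> Sigc i j * (Khat i j - invmx Sigc i j) = 0.
  move=> eij.
  have [z|pos] := eqVneq (Sigc i j) 0; first by rewrite z mul0r.
  have sp : 0 < Sigc i j by rewrite lt_def pos la.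
  have ij : i != j by apply: contraTneq eij => ->; rewrite (negbTE (Ei j)).
  have h2 := mde_dir MDE (negHd_sym R i j) sp
    (fun t t0 tlt a b eab => ltac:(
      rewrite entry_DZ mxE Hd_entry;
      have [/andP [/eqP ai /eqP bj]|h1] := boolP ((a == i) && (b == j));
      [ rewrite ai bj (negbTE ij) /= mulr0n addr0 mulrN1; lra
      | have [/andP [/eqP aj /eqP bi]|h2] := boolP ((a == j) && (b == i));
        [ rewrite aj bi /= mulr0n add0r mulrN1 (symE sSc); lra
        | rewrite /= mulr0n addr0 oppr0 mulr0 addr0; exact: la eab ]])).
  have [e1 e2] := tr_negHd (invmx Sigc) i j; have [e3 e4] := tr_negHd Khat i j.
  rewrite e1 e4 (symE sKc) (symE sK) in h2.
  have := mde_le i j eij => h1.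
  have -> : Khat i j - invmx Sigc i j = 0 by lra.
  by rewrite mulr0.
rewrite /mde_system /=; split; first exact: la.
split; first by move=> i j eij; apply: mle_eq; rewrite eij orbT.
split; first by move=> i; apply: mle_eq; rewrite eqxx.
split; first by move=> i j ij nE; rewrite mde_eq // mK.
split; first exact: mde_le.
split; first by move=> i; apply: mde_eq; exact: Ei.
exact: mde_comp.
Qed.

Lemma part2 (R : realType) d (E : rel 'I_d) (S Khat Sig1 Sig2 : 'M[R]_d) :
  simple_graph E -> posdef Khat -> posdef Sig1 -> posdef Sig2 ->
  mde_system E S Khat Sig1 -> mde_system E S Khat Sig2 -> Sig1 = Sig2.
Proof.
move=> [Es Ei] PK P1 P2 /= [a1 [_ [_ [b1 [c1 [e1 f1]]]]]] [a2 [_ [_ [b2 [c2 [e2 f2]]]]]].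
have u1 := posdef_unit P1; have u2 := posdef_unit P2.
set K1 := invmx Sig1 in b1 c1 e1 f1 *; set K2 := invmx Sig2 in b2 c2 e2 f2 *.
have sK1 : K1^T = K1 := sym_inv P1.1.
have sK2 : K2^T = K2 := sym_inv P2.1.
have sK : Khat^T = Khat := PK.1.
set D := Sig1 - Sig2.
have sD : D^T = D by rewrite /D linearB /= P1.1 P2.1.
have EK : K2 *m D *m K1 = K2 - K1.
  by rewrite /D mulmxBr mulmxBl (mulVmx u2) mul1mx -mulmxA (mulmxV u1) mulmx1.
apply/subr0_eq; apply: (trace_pos sD (posdef_inv P2) (posdef_inv P1)).
have -> : D *m K2 *m D *m K1 = D *m (K2 *m D *m K1) by rewrite !mulmxA.
rewrite EK /mxtrace; apply: sumr_le0 => a _; rewrite mxE; apply: sumr_le0 => b _.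
rewrite !mxE.
have [ab|ab] := eqVneq a b.
  by subst b; rewrite e1 e2 subrr mulr0.
have ba : b != a by rewrite eq_sym.
have [eab|nab] := boolP (E a b); last first.
  have nba : ~~ E b a by rewrite Es.
  have [h1 _] := b1 b a ba nba; have [h2 _] := b2 b a ba nba.
  by rewrite h1 h2 subrr mulr0.
rewrite (symE sK1) (symE sK2).
have g1 := f1 a b eab; have g2 := f2 a b eab.
have l1 := c1 a b eab; have l2 := c2 a b eab.
have p1 : 0 <= Sig1 a b * (Khat a b - K2 a b) by apply: mulr_ge0; [exact: a1 | lra].
have p2 : 0 <= Sig2 a b * (Khat a b - K1 a b) by apply: mulr_ge0; [exact: a2 | lra].
have -> : (Sig1 a b - Sig2 a b) * (K2 a b - K1 a b) =
  Sig1 a b * (Khat a b - K1 a b) + Sig2 a b * (Khat a b - K2 a b)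
  - (Sig1 a b * (Khat a b - K2 a b) + Sig2 a b * (Khat a b - K1 a b)) by ring.
rewrite g1 g2; lra.
Qed.

Unset Implicit Arguments.
Set Strict Implicit.
Set Printing Implicit Defensive.

Theorem theorem5p1 (R : realType) (d n : nat) (E : rel 'I_d)
  (X : 'M[R]_(n, d)) (Khat Sigc : 'M[R]_d) :
  simple_graph E -> (0 < n)%N ->
  is_MLE E (sample_cov X) Khat ->
  is_MDE E Khat Sigc ->
  mde_system E (sample_cov X) Khat Sigc /\
  (forall Sig : 'M[R]_d, posdef Sig ->
     mde_system E (sample_cov X) Khat Sig -> Sig = Sigc).
Proof.
move=> sg _ MLE MDE.
have Sys := part1 sg MLE MDE.
split=> // Sig PSig HS.
exact: (part2 sg MLE.1 PSig MDE.1 HS Sys).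
Qed.
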